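(* Suppose that (i) $K:\mathbb R^p\rightrightarrows\mathbb R^n$ is affine, and (ii) $f:\mathbb R^p\times\mathbb R^n\times\mathbb R^n\to\mathbb R^m$ is $C$-concave. Then the function $\mathfrak m=\nu+\mu$ is convex on $\mathbb R^p\times\mathbb R^n$ and the solution mapping $E$ is convex, in the sense that $\operatorname{gph}E$ is a convex subset of $\mathbb R^p\times\mathbb R^n$.
   Context: $C\subset\mathbb R^m$ nontrivial closed convex pointed cone; $K$ has closed graph and nonempty values (standing assumption). VEP($\xi$): find $x\in K(\xi)$ with $f(\xi,x,z)\in C$ for all $z\in K(\xi)$; $E(\xi)$ its solution set. $\nu(\xi,x)=\sup_{z\in K(\xi)}\operatorname{dist}(f(\xi,x,z),C)$, $\mu(\xi,x)=\operatorname{dist}(x,K(\xi))$, $\mathfrak m=\nu+\mu$. $g$ is $C$-concave if $g(tx_1+(1-t)x_2)-tg(x_1)-(1-t)g(x_2)\in C$ for all $x_1,x_2$, $t\in[0,1]$. A set-valued map $F$ is affine if $F(tx_1+(1-t)x_2)=tF(x_1)+(1-t)F(x_2)$ for all $x_1,x_2$, $t\in[0,1]$. *)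

(* Defs.v *)
From HB Require Import structures.
From mathcomp Require Import all_boot all_order all_algebra.
From mathcomp Require Import all_classical all_reals all_analysis.
Set Implicit Arguments. Unset Strict Implicit. Unset Printing Implicit Defensive.
Import Order.TTheory GRing.Theory Num.Theory.
Import numFieldNormedType.Exports.
Local Open Scope classical_set_scope.
Local Open Scope ring_scope.

Definition enorm {R : realType} {k : nat} (v : 'rV[R]_k) : R :=
  Num.sqrt (\sum_(i < k) v ord0 i ^+ 2).

(* dist(y, S) = inf_{s in S} |y - s|, extended-real valued (+oo if S empty) *)
Definition edist {R : realType} {k : nat} (y : 'rV[R]_k) (S : set 'rV[R]_k) : \bar R :=
  ereal_inf [set (enorm (y - s))%:E | s in S].

Definition is_cone {R : realType} {m : nat} (C : set 'rV[R]_m) : Prop :=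
  C 0 /\ forall (t : R) (c : 'rV[R]_m), 0 <= t -> C c -> C (t *: c).
Definition convex_set_rV {R : realType} {m : nat} (C : set 'rV[R]_m) : Prop :=
  forall (c1 c2 : 'rV[R]_m) (t : R), C c1 -> C c2 -> 0 <= t <= 1 -> C (t *: c1 + (1 - t) *: c2).
Definition pointed {R : realType} {m : nat} (C : set 'rV[R]_m) : Prop :=
  forall c, C c -> C (- c) -> c = 0.
Definition nontrivial {R : realType} {m : nat} (C : set 'rV[R]_m) : Prop :=
  exists c, C c /\ c <> 0.

Definition C_concave {R : realType} {p n m : nat} (C : set 'rV[R]_m)
  (f : 'rV[R]_p -> 'rV[R]_n -> 'rV[R]_n -> 'rV[R]_m) : Prop :=
  forall (xi1 xi2 : 'rV[R]_p) (x1 z1 x2 z2 : 'rV[R]_n) (t : R), 0 <= t <= 1 ->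
    C (f (t *: xi1 + (1 - t) *: xi2) (t *: x1 + (1 - t) *: x2) (t *: z1 + (1 - t) *: z2)
       - t *: f xi1 x1 z1 - (1 - t) *: f xi2 x2 z2).

Definition affine_svm {R : realType} {p n : nat} (K : 'rV[R]_p -> set 'rV[R]_n) : Prop :=
  forall (xi1 xi2 : 'rV[R]_p) (t : R), 0 <= t <= 1 ->
    K (t *: xi1 + (1 - t) *: xi2) =
    [set t *: a + (1 - t) *: b | a in K xi1 & b in K xi2].

Definition gph {R : realType} {p n : nat} (F : 'rV[R]_p -> set 'rV[R]_n)
  : set ('rV[R]_p * 'rV[R]_n) := [set q | F q.1 q.2].

Definition nu {R : realType} {p n m : nat} (C : set 'rV[R]_m)
  (K : 'rV[R]_p -> set 'rV[R]_n) (f : 'rV[R]_p -> 'rV[R]_n -> 'rV[R]_n -> 'rV[R]_m)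
  (xi : 'rV[R]_p) (x : 'rV[R]_n) : \bar R :=
  ereal_sup [set edist (f xi x z) C | z in K xi].
Definition mu {R : realType} {p n : nat} (K : 'rV[R]_p -> set 'rV[R]_n)
  (xi : 'rV[R]_p) (x : 'rV[R]_n) : \bar R := edist x (K xi).
Definition mfrak {R : realType} {p n m : nat} (C : set 'rV[R]_m)
  (K : 'rV[R]_p -> set 'rV[R]_n) (f : 'rV[R]_p -> 'rV[R]_n -> 'rV[R]_n -> 'rV[R]_m)
  (xi : 'rV[R]_p) (x : 'rV[R]_n) : \bar R := (nu C K f xi x + mu K xi x)%E.

Definition Esol {R : realType} {p n m : nat} (C : set 'rV[R]_m)
  (K : 'rV[R]_p -> set 'rV[R]_n) (f : 'rV[R]_p -> 'rV[R]_n -> 'rV[R]_n -> 'rV[R]_m)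
  (xi : 'rV[R]_p) : set 'rV[R]_n :=
  [set x | K xi x /\ forall z, K xi z -> C (f xi x z)].

(* convexity of an extended-real function on R^p x R^n (convention 0 * +oo = 0) *)
Definition convex_efun2 {R : realType} {p n : nat} (g : 'rV[R]_p -> 'rV[R]_n -> \bar R) : Prop :=
  forall (xi1 xi2 : 'rV[R]_p) (x1 x2 : 'rV[R]_n) (t : R), 0 <= t <= 1 ->
    (g (t *: xi1 + (1 - t) *: xi2)%R (t *: x1 + (1 - t) *: x2)%R
     <= t%:E * g xi1 x1 + (1 - t)%R%:E * g xi2 x2)%E.

Definition convex_set2 {R : realType} {p n : nat} (S : set ('rV[R]_p * 'rV[R]_n)) : Prop :=
  forall (q1 q2 : 'rV[R]_p * 'rV[R]_n) (t : R), S q1 -> S q2 -> 0 <= t <= 1 ->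
    S (t *: q1.1 + (1 - t) *: q2.1, t *: q1.2 + (1 - t) *: q2.2).

(* Main.v *)
Require Import Defs.
From mathcomp Require Import all_boot all_order all_algebra.
From mathcomp Require Import all_classical all_reals all_analysis.
From mathcomp Require Import ring lra.
Require Import Defs.
Import Order.TTheory GRing.Theory Num.Theory.
Local Open Scope classical_set_scope.
Local Open Scope ring_scope.

Set Implicit Arguments. Unset Strict Implicit.
Section Aux.
Variable R : realType.

Lemma CS_ineq (k : nat) (a b : 'I_k -> R) :
  (\sum_i a i * b i) ^+ 2 <= (\sum_i a i ^+ 2) * (\sum_i b i ^+ 2).
Proof.
set A := \sum_i a i ^+ 2; set B := \sum_i a i * b i; set D := \sum_i b i ^+ 2.
have D0 : 0 <= D by apply: sumr_ge0 => i _; apply: sqr_ge0.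
have key : 0 <= D * (A * D - B ^+ 2).
  have : 0 <= \sum_i (D * a i - B * b i) ^+ 2 by apply: sumr_ge0 => i _; apply: sqr_ge0.
  have -> : \sum_i (D * a i - B * b i) ^+ 2 =
     \sum_i (D ^+ 2 * a i ^+ 2) - \sum_i ((2 * D * B) * (a i * b i)) + \sum_i (B ^+ 2 * b i ^+ 2).
    rewrite -sumrB -big_split /=; apply: eq_bigr => i _; ring.
  rewrite -!mulr_sumr -/A -/B -/D => H.
  have -> : D * (A * D - B ^+ 2) = D ^+ 2 * A - 2 * D * B * B + B ^+ 2 * D by ring.
  exact: H.
case: (ltrP 0 D) => [Dp|D0'].
  by move: key; rewrite pmulr_rge0 // subr_ge0.
have De : D = 0 by apply/eqP; rewrite eq_le D0' D0.
have bz : forall i, b i = 0.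
  move=> i; have H := @psumr_eq0P _ _ predT (fun j => b j ^+ 2) (fun j _ => sqr_ge0 (b j)) De i isT.
  by apply/eqP; rewrite -sqrf_eq0; apply/eqP.
have -> : B = 0 by rewrite /B big1 // => i _; rewrite bz mulr0.
by rewrite De expr0n /= mulr0.
Qed.

Lemma enorm_ge0 k (v : 'rV[R]_k) : 0 <= enorm v.
Proof. exact: sqrtr_ge0. Qed.

Lemma enormZ k (t : R) (v : 'rV[R]_k) : enorm (t *: v) = `|t| * enorm v.
Proof.
rewrite /enorm; under eq_bigr do rewrite mxE exprMn.
by rewrite -mulr_sumr sqrtrM ?sqr_ge0 // sqrtr_sqr.
Qed.

Lemma enormD k (a b : 'rV[R]_k) : enorm (a + b) <= enorm a + enorm b.
Proof.
rewrite /enorm.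
set A := \sum_i a ord0 i ^+ 2; set B := \sum_i a ord0 i * b ord0 i;
set D := \sum_i b ord0 i ^+ 2.
have A0 : 0 <= A by apply: sumr_ge0 => i _; apply: sqr_ge0.
have D0 : 0 <= D by apply: sumr_ge0 => i _; apply: sqr_ge0.
have -> : \sum_i (a + b) ord0 i ^+ 2 = A + 2 * B + D.
  rewrite /A /B /D mulr_sumr -!big_split /=; apply: eq_bigr => i _; rewrite mxE; ring.
have HB : B <= Num.sqrt A * Num.sqrt D.
  rewrite -sqrtrM // ; apply: le_trans (ler_norm B) _.
  rewrite -sqrtr_sqr; apply: ler_wsqrtr; exact: CS_ineq.
rewrite -[X in _ <= X]ger0_norm ?addr_ge0 ?sqrtr_ge0 // -sqrtr_sqr.
apply: ler_wsqrtr.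
rewrite sqrrD !sqr_sqrtr //.
have : 2 * B <= 2 * (Num.sqrt A * Num.sqrt D) by rewrite ler_pM2l.
rewrite -mulr_natl; lra.
Qed.

Lemma enorm_comb k (t : R) (a b : 'rV[R]_k) : 0 <= t <= 1 ->
  enorm (t *: a + (1 - t) *: b) <= t * enorm a + (1 - t) * enorm b.
Proof.
move=> /andP[t0 t1].
apply: le_trans (enormD _ _) _.
by rewrite !enormZ !ger0_norm // subr_ge0.
Qed.

Lemma edist_ge0 k (y : 'rV[R]_k) (S : set 'rV[R]_k) : (0 <= edist y S)%E.
Proof.
apply: le_ereal_inf_tmp => _ [s _ <-]; rewrite lee_fin; exact: enorm_ge0.
Qed.

Lemma edist_le k (y : 'rV[R]_k) (S : set 'rV[R]_k) s : S s ->
  (edist y S <= (enorm (y - s))%:E)%E.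
Proof. by move=> Ss; apply: ereal_inf_lbound; exists s. Qed.

Lemma edist_fin k (y : 'rV[R]_k) (S : set 'rV[R]_k) : S !=set0 ->
  edist y S \is a fin_num.
Proof.
move=> [s Ss]; rewrite ge0_fin_numE ?edist_ge0 //.
exact: le_lt_trans (edist_le y Ss) (ltry _).
Qed.

Lemma edist_convex k (y y1 y2 : 'rV[R]_k) (S S1 S2 : set 'rV[R]_k) (t : R) :
  0 <= t <= 1 -> S1 !=set0 -> S2 !=set0 ->
  (forall s1 s2, S1 s1 -> S2 s2 ->
     exists2 s, S s & y - s = t *: (y1 - s1) + (1 - t) *: (y2 - s2)) ->
  (edist y S <= t%:E * edist y1 S1 + (1 - t)%:E * edist y2 S2)%E.
Proof.
move=> t01 ne1 ne2 H.
have /andP[t0 t1] := t01.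
have f1 := edist_fin y1 ne1; have f2 := edist_fin y2 ne2.
rewrite -(fineK f1) -(fineK f2).
apply/lee_addgt0Pr => e e0.
have [x1 [s1 S1s1 <-] lt1] := lb_ereal_inf_adherent e0 f1.
have [x2 [s2 S2s2 <-] lt2] := lb_ereal_inf_adherent e0 f2.
rewrite -/(edist y1 S1) -(fineK f1) -EFinD lte_fin in lt1.
rewrite -/(edist y2 S2) -(fineK f2) -EFinD lte_fin in lt2.
have [s Ss eq] := H s1 s2 S1s1 S2s2.
apply: le_trans (edist_le y Ss) _; rewrite eq -!EFinM -!EFinD lee_fin.
apply: le_trans (enorm_comb _ _ t01) _.
have h1 : 0 <= t * (fine (edist y1 S1) + e - enorm (y1 - s1)).
  by apply: mulr_ge0 => //; rewrite subr_ge0 ltW.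
have h2 : 0 <= (1 - t) * (fine (edist y2 S2) + e - enorm (y2 - s2)).
  by apply: mulr_ge0; rewrite subr_ge0 // ltW.
lra.
Qed.

End Aux.

Theorem mainTheorem6 (R : realType) (p n m : nat)
  (C : set 'rV[R]_m) (K : 'rV[R]_p -> set 'rV[R]_n)
  (f : 'rV[R]_p -> 'rV[R]_n -> 'rV[R]_n -> 'rV[R]_m) :
  @closed ('rV[R]_m : normedModType R) C ->
  is_cone C -> convex_set_rV C -> pointed C -> nontrivial C ->
  @closed (('rV[R]_p : normedModType R) * ('rV[R]_n : normedModType R))%type (gph K) ->
  (forall xi, K xi !=set0) ->
  affine_svm K -> C_concave C f ->
  convex_efun2 (mfrak C K f) /\ convex_set2 (gph (Esol C K f)).
Proof.
move=> _ [C0 Ccone] Cconv _ _ _ Kne aff conc.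
have Cadd : forall a b, C a -> C b -> C (a + b).
  move=> a b Ca Cb.
  have h : (0 : R) <= (2^-1 : R) <= 1 by lra.
  have := Ccone 2 _ _ (Cconv a b _ Ca Cb h).
  have -> : 2 *: (2^-1 *: a + (1 - 2^-1) *: b) = a + b.
    by apply/rowP => i; rewrite !mxE; field.
  by apply; lra.
have nuge0 : forall xi x, (0 <= nu C K f xi x)%E.
  move=> xi x; have [z Kz] := Kne xi.
  apply: le_trans (edist_ge0 (f xi x z) C) _.
  by apply: ereal_sup_ubound; exists z.
have muge0 : forall xi x, (0 <= mu K xi x)%E by move=> xi x; exact: edist_ge0.
split.
- move=> xi1 xi2 x1 x2 t t01.
  have /andP[t0 t1] := t01.
  have Hnu : (nu C K f (t *: xi1 + (1 - t) *: xi2) (t *: x1 + (1 - t) *: x2)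
     <= t%:E * nu C K f xi1 x1 + (1 - t)%:E * nu C K f xi2 x2)%E.
    apply: ge_ereal_sup => _ [z Kz <-].
    move: Kz; rewrite (aff xi1 xi2 t t01) => -[z1 K1z1 [z2 K2z2 <-]].
    have Cc := conc xi1 xi2 x1 z1 x2 z2 t t01.
    apply: le_trans (edist_convex (y1 := f xi1 x1 z1) (y2 := f xi2 x2 z2)
                       (S1 := C) (S2 := C) t01 _ _ _) _.
    + by exists 0.
    + by exists 0.
    + move=> s1 s2 Cs1 Cs2.
      exists (t *: s1 + (1 - t) *: s2 +
        (f (t *: xi1 + (1 - t) *: xi2) (t *: x1 + (1 - t) *: x2) (t *: z1 + (1 - t) *: z2)
         - t *: f xi1 x1 z1 - (1 - t) *: f xi2 x2 z2)).
        by apply: Cadd => //; apply: Cconv.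
      by apply/rowP => i; rewrite !mxE; ring.
    apply: leeD; apply: lee_wpmul2l; rewrite ?lee_fin ?subr_ge0 //;
      apply: ereal_sup_ubound.
    + by exists z1.
    + by exists z2.
  have Hmu : (mu K (t *: xi1 + (1 - t) *: xi2) (t *: x1 + (1 - t) *: x2)
     <= t%:E * mu K xi1 x1 + (1 - t)%:E * mu K xi2 x2)%E.
    rewrite /mu (aff xi1 xi2 t t01).
    apply: edist_convex => // s1 s2 K1s1 K2s2.
    exists (t *: s1 + (1 - t) *: s2).
      by exists s1 => //; exists s2.
    by apply/rowP => i; rewrite !mxE; ring.
  rewrite /mfrak; apply: le_trans (leeD Hnu Hmu) _.
  by rewrite !ge0_muleDr // addeACA.
- move=> [xi1 x1] [xi2 x2] t [/= K1 H1] [/= K2 H2] t01.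
  rewrite /gph /Esol /=; split.
    by rewrite aff //; exists x1 => //; exists x2.
  move=> z; rewrite aff // => -[z1 K1z1 [z2 K2z2 <-]].
  have Cc := conc xi1 xi2 x1 z1 x2 z2 t t01.
  set F := f _ _ _ in Cc *.
  have -> : F = (F - t *: f xi1 x1 z1 - (1 - t) *: f xi2 x2 z2)
               + (t *: f xi1 x1 z1 + (1 - t) *: f xi2 x2 z2).
    by apply/rowP => i; rewrite !mxE; ring.
  by apply: Cadd => //; apply: Cconv => //; [apply: H1 | apply: H2].
Qed.
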